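(* For every tree $T$ of order $n \ge 3$, $$\operatorname{irr}(T) > n \operatorname{Var}(T).$$
   Context: For a graph $G=(V,E)$ of order $n$ and size $m$, $d(u)$ denotes the degree of a vertex $u$. The (Albertson) irregularity is $\operatorname{irr}(G)=\sum_{uv\in E}|d(u)-d(v)|$. The degree variance is $\operatorname{Var}(G)=\frac{1}{n}\sum_{u\in V}(d(u)-\overline d)^2$, where $\overline d = 2m/n$ is the average degree. *)

(* Defs.v *)
From mathcomp Require Import all_boot all_order all_algebra.
Set Implicit Arguments. Unset Strict Implicit. Unset Printing Implicit Defensive.
Import Order.TTheory GRing.Theory Num.Theory.
Local Open Scope ring_scope.

Definition simple_graph (T : finType) (e : rel T) : Prop :=
  symmetric e /\ irreflexive e.

Definition connected_graph (T : finType) (e : rel T) : Prop :=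
  forall x y : T, connect e x y.

(* A cycle: a duplicate-free closed walk with at least 3 vertices,
   c = [:: x0; ...; xk], edges x_i x_{i+1} and x_k x_0 (path.v's [cycle]). *)
Definition acyclic_graph (T : finType) (e : rel T) : Prop :=
  forall c : seq T, uniq c -> (2 < size c)%N -> ~~ cycle e c.

Definition is_tree (T : finType) (e : rel T) : Prop :=
  simple_graph e /\ connected_graph e /\ acyclic_graph e.

Definition deg (T : finType) (e : rel T) (u : T) : nat := #|[pred v | e u v]|.

Definition gsize (R : realFieldType) (T : finType) (e : rel T) : R :=
  (#|[pred p : T * T | e p.1 p.2]|)%:R / 2.

(* irr(G) = sum over edges uv of |d(u)-d(v)|; each edge counted once
   (sum over ordered adjacent pairs, halved). *)
Definition irr (R : realFieldType) (T : finType) (e : rel T) : R :=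
  (\sum_(u : T) \sum_(v : T | e u v)
      `|(deg e u)%:R - (deg e v)%:R : R|) / 2.

Definition avg_deg (R : realFieldType) (T : finType) (e : rel T) : R :=
  2 * gsize R e / (#|T|)%:R.

Definition degvar (R : realFieldType) (T : finType) (e : rel T) : R :=
  (\sum_(u : T) ((deg e u)%:R - avg_deg R e) ^+ 2) / (#|T|)%:R.

(* Main.v *)
Require Import Defs.
From mathcomp Require Import all_boot all_order all_algebra.
From mathcomp Require Import ring lra zify.
Set Implicit Arguments. Unset Strict Implicit.
Import Order.TTheory GRing.Theory Num.Theory.

Lemma tree_parent (T : finType) (e : rel T) (r : T) : is_tree e ->
  exists p : T -> T,
    (forall u v, e u v = ((u != r) && (v == p u)) || ((v != r) && (u == p v))) /\
    (forall u, u != r -> p u != r -> p (p u) != u).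
Proof.
move=> [[esym eirr] [econ eacy]].
pose Pk x k := [exists s : k.-tuple T, path e x s && (last x s == r)].
have exP : forall x, exists k, Pk x k.
  move=> x; have /connectP [s ps ls] := econ x r.
  exists (size s); apply/existsP; exists (in_tuple s); by rewrite ps -ls eqxx.
pose dist x := ex_minn (exP x).
have distP : forall x k, Pk x k -> (dist x <= k)%N.
  by move=> x k Pxk; rewrite /dist; case: ex_minnP => m _; apply.
have distE : forall x, Pk x (dist x).
  by move=> x; rewrite /dist; case: ex_minnP.
pose p x := if [pick s : (dist x).-tuple T | path e x s && (last x s == r)] is Some s
            then head x s else x.
have pP : forall x, x != r -> e x (p x) /\ (dist (p x) < dist x)%N.
  move=> x xr; rewrite /p; case: pickP; last first.
    by move=> H; move: (distE x) => /existsP [s]; rewrite H.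
  move=> s /andP [ps ls].
  case: s ps ls => [[|w s'] /= sz] ps ls; first by rewrite ls in xr.
  move/andP: ps => [exw ps]; split => //.
  have szs : size s' = (dist x).-1 by rewrite -(eqP sz).
  have : (dist w <= (dist x).-1)%N.
    apply: distP; apply/existsP; exists (tcast szs (in_tuple s')).
    by rewrite val_tcast /= ps ls.
  by rewrite -(eqP sz) /=; move=> H; apply: leq_ltn_trans H _.
have wf : forall u, u != r -> p u != r -> p (p u) != u.
  move=> u ur pur; apply/eqP => E.
  have [_ h1] := pP _ ur; have [_ h2] := pP _ pur.
  by move: (ltn_trans h2 h1); rewrite E ltnn.
exists p; split => // u v.
apply/idP/idP; last first.
  case/orP => /andP [Hr /eqP ->]; first by case: (pP _ Hr).
  by rewrite esym; case: (pP _ Hr).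
move=> euv; apply/negPn/negP => bad.
pose e' a b := e a b && ~~ (((a == u) && (b == v)) || ((a == v) && (b == u))).
have e'sym : symmetric e'.
  move=> a b; rewrite /e' esym. by case: (a == u); case: (a == v); case: (b == u); case: (b == v).
have toR : forall x, connect e' x r.
  move=> x; have [k hk] : exists k, (dist x <= k)%N by exists (dist x).
  elim: k x hk => [|k IH] x.
    move=> hx; case: (eqVneq x r) => [-> //|xr].
    by have [_ h] := pP _ xr; move: (leq_trans h hx).
  move=> hx; case: (eqVneq x r) => [-> //|xr].
  have [ex h] := pP _ xr.
  apply: connect_trans (IH (p x) _); last by rewrite -ltnS (leq_trans h hx).
  apply: connect1; rewrite /e' ex /=; apply/negP.
  case/orP => /andP [/eqP Ex /eqP Ey]; subst; case/negP: bad.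
    by rewrite xr eqxx.
  by rewrite xr eqxx orbT.
have cvu : connect e' v u.
  apply: connect_trans (toR v) _; by rewrite (sym_connect_sym e'sym).
have uv : u != v by apply/eqP => E; subst; rewrite eirr in euv.
move/connectP: cvu => [s ps ls].
move: ls; case: (shortenP ps) => s' ps' us' _ ls'.
case: s' ps' us' ls' => [|w [|w2 s'']] ps' us' ls' /=.
- by rewrite /= in ls'; rewrite ls' eqxx in uv.
- rewrite /= in ls'; subst w; move: ps' => /= /andP [h _].
  by move: h; rewrite /e' esym euv /= !eqxx /= orbT.
- move/negP: (eacy _ us' isT); apply.
  rewrite /cycle rcons_path; apply/andP; split.
    by apply: sub_path ps' => a b /andP [].
  by rewrite -ls'.
Qed.

Local Open Scope ring_scope.
Lemma arc_sum (V : nmodType) (T : finType) (e : rel T) (r : T) (p : T -> T)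
  (F : T -> T -> V) :
  (forall u v, e u v = ((u != r) && (v == p u)) || ((v != r) && (u == p v))) ->
  (forall u, u != r -> p u != r -> p (p u) != u) ->
  \sum_u \sum_(v | e u v) F u v = \sum_(u | u != r) (F u (p u) + F (p u) u).
Proof.
move=> eE wf.
have split1 : forall u, \sum_(v | e u v) F u v =
   (if u != r then F u (p u) else 0) + \sum_v (if (v != r) && (u == p v) then F u v else 0).
  move=> u; rewrite (bigID (fun v => (u != r) && (v == p u))) /=; congr (_ + _).
    rewrite (eq_bigl (fun v => (u != r) && (v == p u))); last first.
      by move=> v; rewrite eE andb_idl // => ->.
    case: (u != r); last by rewrite big_pred0.
    by rewrite (eq_bigl (fun v => v == p u)) // big_pred1_eq.
  rewrite -big_mkcond; apply: eq_bigl => v; rewrite eE.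
  case: (boolP ((u != r) && (v == p u))) => [/andP [ur /eqP vp]|] /=.
    apply/esym/negbTE; apply/negP => /andP [vr /eqP up].
    by move: (wf _ ur); rewrite -vp vr -up eqxx => /(_ isT).
  by rewrite andbT.
rewrite (eq_bigr _ (fun u _ => split1 u)) big_split /=.
rewrite exchange_big /= -big_mkcond big_split /=; congr (_ + _).
rewrite [RHS]big_mkcond; apply: eq_bigr => v _.
case: (v != r) => /=; last by rewrite big1.
by rewrite -big_mkcond big_pred1_eq.
Qed.

Local Close Scope ring_scope.
Lemma deg_sum_arcs (T : finType) (e : rel T) (u : T) :
  deg e u = \sum_(v | e u v) 1%N.
Proof. by rewrite /deg -sum1_card. Qed.

Lemma arcs_card (T : finType) (e : rel T) :
  #|[pred q : T * T | e q.1 q.2]| = \sum_u deg e u.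
Proof.
rewrite -sum1_card.
rewrite (eq_bigl (fun q : T * T => e q.1 q.2)) //.
rewrite -(pair_big_dep predT (fun u v => e u v) (fun _ _ => 1%N)) /=.
by apply: eq_bigr => u _; rewrite deg_sum_arcs.
Qed.

Lemma tree_degsum (T : finType) (e : rel T) (r : T) : is_tree e ->
  \sum_u deg e u = (2 * (#|T|).-1)%N.
Proof.
move=> Ht; have [p [E W]] := tree_parent r Ht.
rewrite (eq_bigr _ (fun u _ => deg_sum_arcs e u)) (arc_sum (fun _ _ => 1%N) E W).
rewrite -(cardC1 r) -sum1_card big_distrr /=; apply: eq_bigl => u.
by rewrite inE.
Qed.

Local Open Scope ring_scope.
Theorem theorem1 (R : realFieldType) (T : finType) (e : rel T) :
  is_tree e -> (3 <= #|T|)%N ->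
  (#|T|)%:R * degvar R e < irr R e.
Proof.
move=> Ht n3.
have n0 : (0 < #|T|)%N by apply: leq_trans n3.
have [r0 _] : exists r0 : T, true by case/card_gt0P: n0 => x _; exists x.
have DS := tree_degsum r0 Ht.
have [r dr] : exists r, (1 < deg e r)%N.
  case: (boolP [exists r, (1 < deg e r)%N]) => [/existsP //|/existsPn H].
  have : (\sum_u deg e u <= \sum_(u : T) 1)%N.
    by apply: leq_sum => u _; move: (H u); rewrite ltnNge negbK.
  rewrite DS sum1_card.
  case: #|T| n3 => [|[|[|k]]] //= _.
  move=> h; exfalso; lia.
have [p [E W]] := tree_parent r Ht.
set d := fun u => (deg e u)%:R : R.
have arcR := fun F : T -> T -> R => arc_sum F E W.
have degR : forall u, d u = \sum_(v | e u v) 1.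
  by move=> u; rewrite /d deg_sum_arcs natr_sum.
have S2E : \sum_u d u ^+ 2 = \sum_(u | u != r) (d u + d (p u)).
  rewrite -(arcR (fun u _ => d u)); apply: eq_bigr => u _.
  by rewrite expr2 {2}degR mulr_sumr; apply: eq_bigr => v _; rewrite mulr1.
have irrE : irr R e = \sum_(u | u != r) `|d u - d (p u)|.
  rewrite /irr -/d arcR.
  under eq_bigr => u _ do rewrite [`|d (p u) - _|]distrC.
  rewrite big_split /=; lra.
have S1E : \sum_u d u = (2 * (#|T|).-1)%:R by rewrite -DS natr_sum.
have SmE : \sum_u d u = d r + \sum_(u | u != r) d u by rewrite (bigD1 r).
have key : \sum_(u | u != r) d (p u) <=
   \sum_(u | u != r) d u + \sum_(u | u != r) `|d u - d (p u)|.
  rewrite -big_split /=; apply: ler_sum => u _.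
  have := ler_norm (d (p u) - d u); rewrite distrC; lra.
rewrite irrE /degvar /avg_deg /gsize arcs_card DS -/d.
set N := (#|T|)%:R : R.
have N0 : N != 0 by rewrite /N pnatr_eq0 -lt0n.
set a := 2 * ((2 * (#|T|).-1)%N%:R / 2) / N.
have varE : \sum_u (d u - a) ^+ 2 = \sum_u d u ^+ 2 - 2 * a * \sum_u d u + N * a ^+ 2.
  have sq : forall x, (x - a)^+2 = x^+2 + (-(2*a))*x + a^+2 by move=> x; ring.
  under eq_bigr => u _ do rewrite sq.
  rewrite !big_split /= -mulr_sumr.
  rewrite sumr_const -mulr_natl; ring.
have -> : \sum_u ((deg e u)%:R - a)^+2 = \sum_u (d u - a)^+2 by [].
rewrite mulrCA mulfV // mulr1 varE S2E S1E.
set M := (#|T|.-1)%:R : R.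
have hM : N = M + 1 by rewrite /N /M natr1 prednK.
have drR : 2 <= d r by rewrite /d (ler_nat R 2).
have M0 : M + 1 != 0 by rewrite -hM.
rewrite natrM -/M in S1E *.
have ha : a = 2 * M / N by rewrite /a natrM -/M; field.
have F : 2 * a * (2 * M) - N * a ^+ 2 = 4 * M - 4 + 4 / N.
  by rewrite ha hM; field.
have F0 : 0 < 4 / N by rewrite divr_gt0 // /N ltr0n.
rewrite big_split /=.
lra.
Qed.
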